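(* Let $\mathcal G$ be a pseudogroup on a compact metric space $X$ with finite generating set $\mathcal G_1$. Then for every $x\in X$, $n\in\mathbb N$ and $\varepsilon>0$, the sets $B_n(x,\varepsilon)$, $B_n[x,\varepsilon]$ and $\Phi_\varepsilon(x)$ are Borel subsets of $X$.
   Context: $\mathrm{Homeo}(X)$: homeomorphisms $g:D_g\to R_g$ between open subsets of $X$, composed on natural domains $D_{h\circ g}=g^{-1}(D_h)$. A pseudogroup is a subset of $\mathrm{Homeo}(X)$ containing $\mathrm{id}_X$, closed under composition, inversion, restriction to open subsets, and gluing along open covers of the domain; $\mathcal G_1$ generates it if every element locally coincides with finite compositions of elements of $\mathcal G_1$ and their inverses. Let $\mathcal G_n=\{g_1\circ\cdots\circ g_n: g_i\in\mathcal G_1\}$, $\mathcal G_n^x=\{g\in\mathcal G_n: x\in D_g\}$, $B_n(x,\varepsilon)=\{y\in X: d(g(x),g(y))<\varepsilon\ \forall g\in\mathcal G_n^x\cap\mathcal G_n^y\}$, $B_n[x,\varepsilon]=\{y\in X: d(g(x),g(y))\le\varepsilon\ \forall g\in\mathcal G_n^x\cap\mathcal G_n^y\}$, and $\Phi_\varepsilon(x)=\bigcap_{n\in\mathbb N}B_n[x,\varepsilon]$. *)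

(* Defs.v *)
From HB Require Import structures.
From mathcomp Require Import all_boot all_order all_algebra.
From mathcomp Require Import all_classical all_reals topology measure.
Set Implicit Arguments. Unset Strict Implicit. Unset Printing Implicit Defensive.
Import Order.TTheory GRing.Theory Num.Theory.
Local Open Scope classical_set_scope.
Local Open Scope ring_scope.

(** Candidate elements of Homeo(X): a map g : D_g -> R_g between subsets of X,
    represented by its domain, range, the map and its inverse (values outside
    D_g / R_g are irrelevant). *)
Record phomeo (X : Type) := PHomeo {
  ph_dom : set X; ph_ran : set X; ph_fun : X -> X; ph_inv : X -> X }.

Fixpoint all_in (T : Type) (P : set T) (s : seq T) : Prop :=
  if s is x :: s' then P x /\ all_in P s' else True.

Section Pseudogroups.
Variable X : topologicalType.

Definition is_phomeo (g : phomeo X) : Prop :=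
  [/\ open (ph_dom g) /\ open (ph_ran g),
      (forall x, ph_dom g x -> ph_ran g (ph_fun g x) /\ ph_inv g (ph_fun g x) = x),
      (forall y, ph_ran g y -> ph_dom g (ph_inv g y) /\ ph_fun g (ph_inv g y) = y),
      {within ph_dom g, continuous (ph_fun g)} &
      {within ph_ran g, continuous (ph_inv g)}].

Definition ph_eq (g h : phomeo X) : Prop :=
  [/\ ph_dom g = ph_dom h, ph_ran g = ph_ran h,
      (forall x, ph_dom g x -> ph_fun g x = ph_fun h x) &
      (forall y, ph_ran g y -> ph_inv g y = ph_inv h y)].

Definition ph_id : phomeo X := PHomeo setT setT id id.

Definition ph_comp (h g : phomeo X) : phomeo X :=
  PHomeo (ph_dom g `&` (ph_fun g @^-1` ph_dom h))
         (ph_ran h `&` (ph_inv h @^-1` ph_ran g))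
         (ph_fun h \o ph_fun g) (ph_inv g \o ph_inv h).

Definition ph_invert (g : phomeo X) : phomeo X :=
  PHomeo (ph_ran g) (ph_dom g) (ph_inv g) (ph_fun g).

Definition ph_restrict (g : phomeo X) (U : set X) : phomeo X :=
  PHomeo (ph_dom g `&` U) (ph_ran g `&` (ph_inv g @^-1` U)) (ph_fun g) (ph_inv g).

Definition is_pseudogroup (G : set (phomeo X)) : Prop :=
  [/\ (forall g, G g -> is_phomeo g) /\
        (forall g h, G g -> ph_eq g h -> G h),
      G ph_id /\ (forall g h, G g -> G h -> G (ph_comp h g)),
      (forall g, G g -> G (ph_invert g)) /\
      (forall g U, G g -> open U -> G (ph_restrict g U)) &
      (forall g (I : Type) (U : I -> set X), is_phomeo g ->
         (forall i, open (U i)) -> ph_dom g = \bigcup_i U i ->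
         (forall i, G (ph_restrict g (U i))) -> G g)].

Definition ph_compose (s : seq (phomeo X)) : phomeo X := foldr ph_comp ph_id s.

Definition ph_letter (l : bool * phomeo X) : phomeo X :=
  if l.1 then l.2 else ph_invert l.2.

Definition generates (G1 G : set (phomeo X)) : Prop :=
  G1 `<=` G /\
  forall g, G g -> forall x, ph_dom g x ->
    exists (w : seq (bool * phomeo X)) (U : set X),
      [/\ all_in (fun l => G1 l.2) w /\ open U, U x, U `<=` ph_dom g,
          U `<=` ph_dom (ph_compose (map ph_letter w)) &
          forall y, U y -> ph_fun g y = ph_fun (ph_compose (map ph_letter w)) y].

Definition in_Gn (G1 : set (phomeo X)) (n : nat) (s : seq (phomeo X)) : Prop :=
  size s = n /\ all_in G1 s.

Definition borel (A : set X) : Prop := <<s open >> A.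

End Pseudogroups.

Section DynBalls.
Variables (R : realType) (X : metricType R).

Definition Bn (G1 : set (phomeo X)) (n : nat) (x : X) (e : R) : set X :=
  [set y | forall s, in_Gn G1 n s ->
     ph_dom (ph_compose s) x -> ph_dom (ph_compose s) y ->
     mdist (ph_fun (ph_compose s) x) (ph_fun (ph_compose s) y) < e].

Definition Bn_closed (G1 : set (phomeo X)) (n : nat) (x : X) (e : R) : set X :=
  [set y | forall s, in_Gn G1 n s ->
     ph_dom (ph_compose s) x -> ph_dom (ph_compose s) y ->
     mdist (ph_fun (ph_compose s) x) (ph_fun (ph_compose s) y) <= e].

Definition Phi (G1 : set (phomeo X)) (e : R) (x : X) : set X :=
  \bigcap_(n in [set: nat]) Bn_closed G1 n x e.

End DynBalls.

(* Main.v *)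
Require Import Defs.
From HB Require Import structures.
From mathcomp Require Import all_boot all_order all_algebra.
From mathcomp Require Import all_classical all_reals topology measure.
Import Order.TTheory GRing.Theory Num.Theory.
Local Open Scope classical_set_scope.
Local Open Scope ring_scope.
Set Implicit Arguments. Unset Strict Implicit. Unset Printing Implicit Defensive.

Section Aux.
Variable X : topologicalType.

Lemma borel_open (A : set X) : open A -> borel A.
Proof. by move=> oA; apply: sub_sigma_algebra. Qed.

Lemma borelC (A : set X) : borel A -> borel (~` A).
Proof. by move=> bA; rewrite -setTD; apply: sigma_algebraCD. Qed.

Lemma borelU (A B : set X) : borel A -> borel B -> borel (A `|` B).
Proof.
move=> bA bB; rewrite -bigcup2E; apply: sigma_algebra_bigcup => -[|[|i]] //=.
by apply: sigma_algebra0.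
Qed.

Lemma borelI (A B : set X) : borel A -> borel B -> borel (A `&` B).
Proof.
move=> bA bB; rewrite -[A `&` B]setCK setCI.
by apply: borelC; apply: borelU; apply: borelC.
Qed.

Lemma borelT : borel (@setT X).
Proof. rewrite -setC0; apply: borelC; apply: sigma_algebra0. Qed.

Lemma borel_bigcapN (F : nat -> set X) :
  (forall n, borel (F n)) -> borel (\bigcap_(n in [set: nat]) F n).
Proof.
move=> bF; rewrite -[X in borel X]setCK setC_bigcap; apply: borelC.
rewrite bigcup_mkcond; apply: sigma_algebra_bigcup => n.
by rewrite mem_setT; apply: borelC.
Qed.

Lemma borel_fin_bigcap (I : Type) (D : set I) (F : I -> set X) :
  finite_set D -> (forall i, D i -> borel (F i)) -> borel (\bigcap_(i in D) F i).
Proof.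
elim/Pchoice: I => I in D F * => Dfin Fb.
rewrite -bigsetI_fset_set//.
have : forall i, i \in finmap.enum_fset (fset_set D) -> borel (F i).
  by move=> i; rewrite in_fset_set ?inE//; apply: Fb.
elim: (finmap.enum_fset _) => [|a l IH] hl.
  by rewrite big_nil; exact: borelT.
rewrite big_cons.
have ha : borel (F a) by apply: hl; rewrite inE eqxx.
have hr : borel (\big[setI/[set: X]]_(i <- l) F i).
  by apply: IH => i il; apply: hl; rewrite inE il orbT.
exact: (borelI ha hr).
Qed.

Definition goodph (g : phomeo X) :=
  open (ph_dom g) /\ forall V, open V -> open (ph_dom g `&` ph_fun g @^-1` V).

Lemma goodph_phomeo g : is_phomeo g -> goodph g.
Proof.
case=> -[oD _] _ _ cf _; split => //.
by apply/continuous_inP => //; rewrite -continuous_open_subspace.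
Qed.

Lemma goodph_id : goodph (@ph_id X).
Proof. by split => [|V oV]; [exact: openT| rewrite setTI]. Qed.

Lemma goodph_comp h g : goodph h -> goodph g -> goodph (ph_comp h g).
Proof.
move=> [oh ch] [og cg]; split => [|V oV] /=; first exact: cg.
have -> : (ph_dom g `&` ph_fun g @^-1` ph_dom h) `&`
   (ph_fun h \o ph_fun g) @^-1` V = ph_dom g `&` ph_fun g @^-1`
   (ph_dom h `&` ph_fun h @^-1` V).
  by apply/seteqP; split => y /=; tauto.
by apply: cg; apply: ch.
Qed.

Lemma goodph_compose (G1 : set (phomeo X)) s :
  (forall g, G1 g -> is_phomeo g) -> all_in G1 s -> goodph (ph_compose s).
Proof.
move=> hG; elim: s => [|g s IH] /=; first by move=> _; exact: goodph_id.
by move=> [g1 As]; apply: goodph_comp; [apply: goodph_phomeo; apply: hG|apply: IH].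
Qed.

Lemma borel_words (G1 : set (phomeo X)) n (F : seq (phomeo X) -> set X) :
  finite_set G1 -> (forall s, in_Gn G1 n s -> borel (F s)) ->
  borel [set y | forall s, in_Gn G1 n s -> F s y].
Proof.
move=> fG; elim: n F => [|n IH] F hF.
  have -> : [set y | forall s, in_Gn G1 0 s -> F s y] = F [::].
    apply/seteqP; split => y /=; first by apply; split.
    by move=> Fy [|a s] // [].
  by apply: hF; split.
have -> : [set y | forall s, in_Gn G1 n.+1 s -> F s y] =
  \bigcap_(g in G1) [set y | forall s, in_Gn G1 n s -> F (g :: s) y].
  apply/seteqP; split => y /=.
    by move=> H g G1g s [ss As]; apply: H; split => //=; rewrite ss.
  move=> H [|g s] [] //= [ss] [G1g As].
  by apply: (H g G1g s).
apply: borel_fin_bigcap => // g G1g; apply: IH => s [ss As].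
by apply: hF; split => //=; rewrite ss.
Qed.

End Aux.

Section Metric.
Variables (R : realType) (X : metricType R).

Lemma open_mdist_lt (a : X) (e : R) : open [set w | mdist a w < e].
Proof.
rewrite openE => w hw; rewrite /interior; apply/nbhs_ballP.
exists (e - mdist a w); first by rewrite /= subr_gt0.
move=> z; rewrite ballEmdist /= => hz.
rewrite (le_lt_trans (metric_triangle a w z))//.
by rewrite -ltrBrDl.
Qed.

Lemma open_mdist_gt (a : X) (e : R) : open [set w | e < mdist a w].
Proof.
rewrite openE => w hw; rewrite /interior; apply/nbhs_ballP.
exists (mdist a w - e); first by rewrite /= subr_gt0.
move=> z; rewrite ballEmdist /= => hz.
have := metric_triangle a z w; rewrite (metric_sym z w) => h.
rewrite ltrBrDl in hz.
rewrite -(ltrD2r (mdist w z)); apply: lt_le_trans hz _.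
exact: h.
Qed.

End Metric.

Theorem mainTheorem4 (R : realType) (X : metricType R)
  (G G1 : set (phomeo X)) :
  compact [set: X] ->
  is_pseudogroup G ->
  finite_set G1 ->
  (forall g, G1 g -> is_phomeo g) ->
  generates G1 G ->
  forall (x : X) (n : nat) (e : R), 0 < e ->
    [/\ borel (Bn G1 n x e), borel (Bn_closed G1 n x e) & borel (Phi G1 e x)].
Proof.
move=> _ _ fG hG _ x n e e0.
have hc : forall m, borel (Bn_closed G1 m x e).
  move=> m; apply: (borel_words (F := fun s => [set y |
     ph_dom (ph_compose s) x -> ph_dom (ph_compose s) y ->
     mdist (ph_fun (ph_compose s) x) (ph_fun (ph_compose s) y) <= e])) => //.
  move=> s [_ As]; have [oD cD] := goodph_compose hG As.
  have [Dx|nDx] := pselect (ph_dom (ph_compose s) x); last first.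
    have -> : [set y | ph_dom (ph_compose s) x -> ph_dom (ph_compose s) y ->
      mdist (ph_fun (ph_compose s) x) (ph_fun (ph_compose s) y) <= e] = setT.
      by apply/seteqP; split => y //= _.
    exact: borelT.
  set S := (X in borel X).
  have -> : S = ~` (ph_dom (ph_compose s) `&` ph_fun (ph_compose s) @^-1`
      [set w | e < mdist (ph_fun (ph_compose s) x) w]).
    apply/seteqP; split => y /=.
      by move=> H [Dy]; rewrite ltNge (H Dx Dy).
    move=> H _ Dy; rewrite leNgt; apply/negP => hy; exact: H.
  apply: borelC; apply: borel_open; apply: cD; exact: open_mdist_gt.
split => //.
  apply: (borel_words (F := fun s => [set y |
     ph_dom (ph_compose s) x -> ph_dom (ph_compose s) y ->
     mdist (ph_fun (ph_compose s) x) (ph_fun (ph_compose s) y) < e])) => //.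
  move=> s [_ As]; have [oD cD] := goodph_compose hG As.
  have [Dx|nDx] := pselect (ph_dom (ph_compose s) x); last first.
    have -> : [set y | ph_dom (ph_compose s) x -> ph_dom (ph_compose s) y ->
      mdist (ph_fun (ph_compose s) x) (ph_fun (ph_compose s) y) < e] = setT.
      by apply/seteqP; split => y //= _.
    exact: borelT.
  set S := (X in borel X).
  have -> : S = ~` ph_dom (ph_compose s) `|` (ph_dom (ph_compose s) `&`
      ph_fun (ph_compose s) @^-1`
      [set w | mdist (ph_fun (ph_compose s) x) w < e]).
    apply/seteqP; split => y /=.
      move=> H; have [Dy|nDy] := pselect (ph_dom (ph_compose s) y).
        by right; split => //; apply: H.
      by left.
    by move=> [nDy _ Dy|[_ h] _ _] //; exfalso; exact: nDy.
  have h1 : borel (~` ph_dom (ph_compose s)).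
    by apply: borelC; apply: borel_open.
  have h2 : borel (ph_dom (ph_compose s) `&` ph_fun (ph_compose s) @^-1`
      [set w | mdist (ph_fun (ph_compose s) x) w < e]).
    apply: borel_open; apply: cD; exact: open_mdist_lt.
  exact: (borelU h1 h2).
by apply: borel_bigcapN.
Qed.
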